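(* Let $(X,\|\cdot\|_X)$ be a Banach space and $\mathcal{K}\subset X$ compact. For every $n\ge1$ and every $\gamma>0$, $$d_n^{\gamma^2\mathrm{diam}(\mathcal{K})}(\mathcal{K})_X\le\delta^*_{n,\gamma}(\mathcal{K})_X.$$
   Context: $\mathrm{diam}(\mathcal{K})=\sup_{f,g\in\mathcal{K}}\|f-g\|_X$. The stable manifold width is $\delta^*_{n,\gamma}(\mathcal{K})_X=\inf_{a,M,\|\cdot\|_{Y_n}}\sup_{f\in\mathcal{K}}\|f-M(a(f))\|_X$, the infimum over all norms $\|\cdot\|_{Y_n}$ on $\mathbb{R}^n$ and all maps $a:\mathcal{K}\to(\mathbb{R}^n,\|\cdot\|_{Y_n})$, $M:(\mathbb{R}^n,\|\cdot\|_{Y_n})\to X$ that are both $\gamma$-Lipschitz. For $k\ge1$ and a norm $\|\cdot\|_{Y_k}$ on $\mathbb{R}^k$ let $B_{Y_k}=\{y\in\mathbb{R}^k:\|y\|_{Y_k}\le1\}$; $d^\gamma(\mathcal{K},Y_k)_X=\inf_{\Phi}\sup_{f\in\mathcal{K}}\inf_{y\in B_{Y_k}}\|f-\Phi(y)\|_X$, the infimum over all maps $\Phi:B_{Y_k}\to X$ with $\|\Phi(y)-\Phi(y')\|_X\le\gamma\|y-y'\|_{Y_k}$; and the Lipschitz width is $d_n^\gamma(\mathcal{K})_X=\inf_{1\le k\le n}\inf_{\|\cdot\|_{Y_k}}d^\gamma(\mathcal{K},Y_k)_X$, the inner infimum over all norms on $\mathbb{R}^k$. *)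

(* Defs.v *)
From HB Require Import structures.
From mathcomp Require Import all_boot all_order all_algebra.
From mathcomp Require Import all_classical all_reals all_analysis.
Set Implicit Arguments. Unset Strict Implicit. Unset Printing Implicit Defensive.
Import Order.TTheory GRing.Theory Num.Theory.
Import numFieldNormedType.Exports.
Local Open Scope classical_set_scope.
Local Open Scope ring_scope.

Section Widths.
Context {R : realType} {X : normedModType R}.

Definition is_norm (n : nat) (N : 'rV[R]_n -> R) : Prop :=
  [/\ (forall y, 0 <= N y),
      (forall y, N y = 0 -> y = 0),
      (forall (c : R) y, N (c *: y) = `|c| * N y) &
      (forall y y', N (y + y') <= N y + N y')].

(* diam(K) = sup_{f,g in K} ||f - g||, as a real number (finite for a
   nonempty compact K; equal to 0 by convention if K is empty). *)
Definition diam (K : set X) : R :=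
  fine (ereal_sup [set e | exists f g, K f /\ K g /\ e = (`|f - g|)%:E]).

Definition stable_width (K : set X) (n : nat) (gamma : R) : \bar R :=
  ereal_inf [set e | exists (N : 'rV[R]_n -> R) (a : X -> 'rV[R]_n)
                            (M : 'rV[R]_n -> X),
     [/\ is_norm N,
         (forall f g, K f -> K g -> N (a f - a g) <= gamma * `|f - g|),
         (forall y y', `|M y - M y'| <= gamma * N (y - y')) &
         e = ereal_sup [set (`|f - M (a f)|)%:E | f in K]]].

Definition lip_width_Y (k : nat) (N : 'rV[R]_k -> R) (K : set X) (gamma : R)
  : \bar R :=
  ereal_inf [set e | exists Phi : 'rV[R]_k -> X,
     (forall y y', N y <= 1 -> N y' <= 1 ->
        `|Phi y - Phi y'| <= gamma * N (y - y')) /\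
     e = ereal_sup [set ereal_inf [set (`|f - Phi y|)%:E | y in [set y | N y <= 1]]
                   | f in K]].

Definition lip_width (K : set X) (n : nat) (gamma : R) : \bar R :=
  ereal_inf [set e | exists (k : nat) (N : 'rV[R]_k -> R),
     [/\ (1 <= k <= n)%N, is_norm N & e = lip_width_Y N K gamma]].

End Widths.

(* Main.v *)
Require Import Defs.
From HB Require Import structures.
From mathcomp Require Import all_boot all_order all_algebra.
From mathcomp Require Import all_classical all_reals all_analysis.
Import Order.TTheory GRing.Theory Num.Theory.
Import numFieldNormedType.Exports.
Local Open Scope classical_set_scope.
Local Open Scope ring_scope.

Theorem theorem6p1 (R : realType) (X : completeNormedModType R) (K : set X)
  (hK : compact K) (n : nat) (hn : (1 <= n)%N) (gamma : R) (hgamma : 0 < gamma) :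
  (lip_width K n (gamma ^+ 2 * diam K) <= stable_width K n gamma)%E.
Proof.
have diamP : forall f g, K f -> K g -> `|f - g| <= diam K.
  move=> f g Kf Kg.
  have [B [Br HB]] := compact_bounded hK.
  have HB1 : forall x, K x -> `|x| <= B + 1.
    by apply: HB; rewrite ltrDl.
  rewrite /diam.
  set S := [set e | _].
  have h1 : (`|f - g|%:E <= ereal_sup S)%E.
    by apply: ereal_sup_ubound; exists f, g.
  have h2 : (ereal_sup S <= (2 * (B + 1))%:E)%E.
    apply: ge_ereal_sup => _ [x [y [Kx [Ky ->]]]].
    rewrite lee_fin; apply: le_trans (ler_normB _ _) _.
    by rewrite mulr2n mulrDl mul1r lerD ?HB1.
  move: h1 h2; case: (ereal_sup S) => [r| |] //=.
have D0 : 0 <= diam K.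
  rewrite /diam; set S := [set e | _].
  have [[f0 Kf0]|K0] := pselect (exists f, K f).
    apply: fine_ge0; apply: le_trans (ereal_sup_ubound _); last first.
      by exists f0, f0.
    by rewrite subrr normr0.
  have -> : S = set0.
    by apply/seteqP; split => // e [f [g [Kf _]]]; apply: K0; exists f.
  by rewrite ereal_sup0.
set D := diam K in diamP D0 *.
have [f0 hf0] : exists f0 : X, forall f, K f -> K f0.
  have [[f0 Kf0]|K0] := pselect (exists f, K f).
    by exists f0.
  by exists 0 => f Kf; exfalso; apply: K0; exists f.
apply: le_ereal_inf_tmp => _ [N [a [M [hN ha hM ->]]]].
case: hN => N0 Nz NZ ND.
pose c := gamma * D.
pose Phi y := M (a f0 + c *: y).
apply: (@le_trans _ _ (lip_width_Y N K (gamma ^+ 2 * D))).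
  apply: ereal_inf_lbound; exists n, N; split => //.
  by rewrite hn leqnn.
apply: (@le_trans _ _ (ereal_sup [set ereal_inf [set (`|f - Phi y|)%:E
      | y in [set y | N y <= 1]] | f in K])).
  apply: ereal_inf_lbound; exists Phi; split => //.
  move=> y y' _ _; rewrite /Phi; apply: le_trans (hM _ _) _.
  have -> : a f0 + c *: y - (a f0 + c *: y') = c *: (y - y').
    by rewrite scalerBr opprD addrACA subrr add0r.
  rewrite NZ ger0_norm; last by rewrite mulr_ge0 // ltW.
  by rewrite /c expr2 !mulrA.
apply: ge_ereal_sup => _ [f Kf <-].
apply: le_trans (ereal_sup_ubound _); last by exists f.
apply: ereal_inf_lbound.
have Kf0 := hf0 _ Kf.
have [Dz|Dpos] := eqVneq D 0.
  exists 0.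
    have N00 : N 0 = 0 by have := NZ 0 0; rewrite scale0r normr0 mul0r.
    by rewrite /= N00 ler01.
  rewrite /Phi scaler0 addr0.
  have : `|f - f0| <= 0 by rewrite -Dz diamP.
  by rewrite normr_le0 subr_eq0 => /eqP ->.
have cpos : 0 < c by rewrite /c mulr_gt0 // lt_def Dpos D0.
exists (c^-1 *: (a f - a f0)).
  rewrite /= NZ ger0_norm; last by rewrite invr_ge0 ltW.
  rewrite -ler_pdivlMl ?invr_gt0 // invrK mulr1.
  apply: le_trans (ha _ _ Kf Kf0) _.
  by rewrite /c ler_pM2l // diamP.
rewrite /Phi scalerA mulfV ?gt_eqF // scale1r.
by rewrite [a f0 + _]addrC addrNK.
Qed.
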